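(* Let $F\in[0,1]$ and $0\le p\le F$. For $i,j\in\{0,1\}$ let $F'_{ij,\max}=\max\{F'_{ij}(\rho_1\otimes\rho_2):\rho_1,\rho_2\in S_{p,F}\}$ and $F'_{ij,\min}=\min\{F'_{ij}(\rho_1\otimes\rho_2):\rho_1,\rho_2\in S_{p,F}\}$. Then these quantities do not depend on $(i,j)$: $F'_{ij,\max}=F'_{00,\max}$ and $F'_{ij,\min}=F'_{00,\min}$ for all $i,j$.
   Context: For qubit registers $(R,T)$, $|\Psi_{ij}\rangle_{RT}=(I_R\otimes(X^iZ^j)_T)\tfrac1{\sqrt2}(|00\rangle+|11\rangle)$. $S_{p,F}$ is the set of two-qubit density operators $\rho$ with $\rho=p|\Psi_{00}\rangle\langle\Psi_{00}|+(1-p)\sigma$ for some density operator $\sigma$ and $\langle\Psi_{00}|\rho|\Psi_{00}\rangle=F$. For $\rho_1$ on $(A_1,B_1)$ and $\rho_2$ on $(A_2,B_2)$, $p'_{ij}(\rho_1\otimes\rho_2)=\mathrm{Tr}[|\Psi_{ij}\rangle\langle\Psi_{ij}|_{A_1A_2}\rho_1\otimes\rho_2]$ and $F'_{ij}(\rho_1\otimes\rho_2)=\frac1{p'_{ij}}\mathrm{Tr}[|\Psi_{ij}\rangle\langle\Psi_{ij}|_{B_1B_2}|\Psi_{ij}\rangle\langle\Psi_{ij}|_{A_1A_2}\rho_1\otimes\rho_2]$ (postselected end-to-end fidelity of an entanglement swap with Bell-state measurement outcome $ij$ on $(A_1,A_2)$). *)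

(* Defs.v *)
From HB Require Import structures.
From mathcomp Require Import all_boot all_order all_algebra.
From mathcomp Require Import complex.
Set Implicit Arguments. Unset Strict Implicit. Unset Printing Implicit Defensive.
Import Order.TTheory GRing.Theory Num.Theory.
Local Open Scope ring_scope.
Local Open Scope complex_scope.

Section Defs.
Variable R : rcfType.
Local Notation qq := (bool * bool)%type.
Local Notation C := R[i].

(* Operators on a finite-dimensional Hilbert space with basis T,
   given by their matrix entries; kets are coordinate functions. *)
Definition op (T : finType) := T -> T -> C.
Definition ket (T : finType) := T -> C.

Definition opmul (T : finType) (A B : op T) : op T :=
  fun x y => \sum_(z : T) A x z * B z y.
Definition trace (T : finType) (A : op T) : C := \sum_(x : T) A x x.
Definition expect (T : finType) (v : ket T) (A : op T) : C :=
  \sum_(x : T) \sum_(y : T) (v x)^* * A x y * v y.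
Definition proj (T : finType) (v : ket T) : op T := fun x y => v x * (v y)^*.

Definition density (T : finType) (rho : op T) : Prop :=
  (forall v : ket T, 0 <= expect v rho) /\ trace rho = 1.

(* qubit = basis {0,1} = bool; a register pair (R,T) has basis bool * bool,
   the first component being register R, the second register T. *)
Definition pauliX : op bool := fun x y => if x == ~~ y then 1 else 0.
Definition pauliZ : op bool := fun x y => if x == y then (if x then -1 else 1) else 0.
Definition opexp (T : finType) (A : op T) (n : bool) : op T :=
  if n then A else (fun x y => if x == y then 1 else 0).

(* (I_R (x) U_T) applied to a ket on (R,T) *)
Definition applyT (U : op bool) (v : ket qq) : ket qq :=
  fun rt => \sum_(t : bool) U rt.2 t * v (rt.1, t).

Definition phiplus : ket qq :=
  fun rt => if rt.1 == rt.2 then (sqrtC 2)^-1 else 0.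

Definition Psi (i j : bool) : ket qq :=
  applyT (opmul (opexp pauliX i) (opexp pauliZ j)) phiplus.

Definition S_pF (p F : R) (rho : op qq) : Prop :=
  density rho /\
  (exists sigma : op qq, density sigma /\
     rho = (fun x y => p%:C * proj (Psi false false) x y + (1 - p)%:C * sigma x y)) /\
  expect (Psi false false) rho = F%:C.

(* Four registers ((A1,B1),(A2,B2)). *)
Definition four := (qq * qq)%type.

Definition tensor (rho1 rho2 : op qq) : op four :=
  fun x y => rho1 x.1 y.1 * rho2 x.2 y.2.

(* M acting on registers (A1,A2), identity on (B1,B2) *)
Definition onA (M : op qq) : op four :=
  fun x y => M (x.1.1, x.2.1) (y.1.1, y.2.1) *
             (if (x.1.2 == y.1.2) && (x.2.2 == y.2.2) then 1 else 0).
(* M acting on registers (B1,B2), identity on (A1,A2) *)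
Definition onB (M : op qq) : op four :=
  fun x y => M (x.1.2, x.2.2) (y.1.2, y.2.2) *
             (if (x.1.1 == y.1.1) && (x.2.1 == y.2.1) then 1 else 0).

Definition pprime (i j : bool) (rho1 rho2 : op qq) : C :=
  trace (opmul (onA (proj (Psi i j))) (tensor rho1 rho2)).

Definition Fprime (i j : bool) (rho1 rho2 : op qq) : C :=
  (pprime i j rho1 rho2)^-1 *
  trace (opmul (onB (proj (Psi i j)))
               (opmul (onA (proj (Psi i j))) (tensor rho1 rho2))).

(* the set of values F'_ij(rho1 (x) rho2), rho1, rho2 in S_{p,F},
   over the pairs for which F'_ij is defined (p'_ij <> 0) *)
Definition Fvalues (p F : R) (i j : bool) (x : C) : Prop :=
  exists rho1 rho2, S_pF p F rho1 /\ S_pF p F rho2 /\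
    pprime i j rho1 rho2 != 0 /\ x = Fprime i j rho1 rho2.

Definition is_max (S : C -> Prop) (x : C) : Prop := S x /\ forall y, S y -> y <= x.
Definition is_min (S : C -> Prop) (x : C) : Prop := S x /\ forall y, S y -> x <= y.

End Defs.

(* Main.v *)
Require Import Defs.
From HB Require Import structures.
From mathcomp Require Import all_boot all_order all_algebra.
From mathcomp Require Import complex.
From mathcomp Require Import ring.
From Stdlib Require Import FunctionalExtensionality.
Import Order.TTheory GRing.Theory Num.Theory.
Local Open Scope ring_scope.

Section Aux.
Variable R : rcfType.
Local Notation qq := (bool * bool)%type.
Local Notation C := R[i].

Lemma cN1 : ((-1 : C))^* = -1.
Proof. by rewrite rmorphN1. Qed.
Lemma c1 : ((1 : C))^* = 1.
Proof. by rewrite rmorph1. Qed.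

Definition sg (j b : bool) : C := if j && b then -1 else 1.

Lemma conjM (x y : C) : (x * y)^* = x^* * y^*.
Proof. exact: rmorphM. Qed.

Lemma sgJ j b : (sg j b)^* = sg j b.
Proof. rewrite /sg; case: (j && b); [exact: cN1 | exact: c1]. Qed.

Lemma PsiE (i j r t : bool) :
  Psi R i j (r, t) = sg j (t (+) i) * phiplus R (r, t (+) i).
Proof.
rewrite /Psi /applyT /opmul /opexp /pauliX /pauliZ /sg /=.
rewrite !big_bool /=.
by case: i; case: j; case: r; case: t => /=; ring.
Qed.


Variables i j : bool.

Definition g2 (x : qq) : qq := (x.1 (+) i, x.2 (+) i).
Definition s2 (x : qq) : C := sg j x.1 * sg j x.2.
Definition tw (rho : op R qq) : op R qq :=
  fun x y => s2 x * s2 y * rho (g2 x) (g2 y).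
Definition G4 (x : four) : four := (x.1, g2 x.2).
Definition s4 (x : four) : C := s2 x.2.
Definition conj4 (M : op R four) : op R four :=
  fun x y => s4 x * s4 y * M (G4 x) (G4 y).

Lemma g2K : involutive g2.
Proof. by case=> a b; rewrite /g2 /= !addbK. Qed.
Lemma G4K : involutive G4.
Proof. by case=> a b; rewrite /G4 /= g2K. Qed.
Lemma g2inj : injective g2. Proof. exact: inv_inj g2K. Qed.
Lemma G4inj : injective G4. Proof. exact: inv_inj G4K. Qed.

Lemma s2s2 x : s2 x * s2 x = 1.
Proof. by case: x => a b; rewrite /s2 /sg; case: j; case: a; case: b => /=; ring. Qed.
Lemma s2g2 x : s2 x * s2 (g2 x) = 1.
Proof. by case: x => a b; rewrite /s2 /g2 /sg; case: i; case: j; case: a; case: b => /=; ring. Qed.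
Lemma s2J x : (s2 x)^* = s2 x.
Proof. by rewrite /s2 conjM !sgJ. Qed.
Lemma phiE x : s2 x * phiplus R (g2 x) = phiplus R x.
Proof. by case: x => a b; rewrite /s2 /g2 /sg /phiplus; case: i; case: j; case: a; case: b => /=; ring. Qed.
Lemma phiE' x : s2 (g2 x) * phiplus R (g2 x) = phiplus R x.
Proof. by case: x => a b; rewrite /s2 /g2 /sg /phiplus; case: i; case: j; case: a; case: b => /=; ring. Qed.

Lemma trace_conj4 M : trace (conj4 M) = trace M.
Proof.
rewrite /trace /conj4 /s4.
rewrite [RHS](reindex_inj G4inj) /=.
by apply: eq_bigr => x _; rewrite s2s2 mul1r.
Qed.

Lemma conj4_mul A B : conj4 (opmul A B) = opmul (conj4 A) (conj4 B).
Proof.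
apply: functional_extensionality => x; apply: functional_extensionality => y.
rewrite /conj4 /opmul mulr_sumr [RHS](reindex_inj G4inj) /=.
apply: eq_bigr => z _; rewrite G4K.
have h : s4 (G4 z) * s4 (G4 z) = 1 by rewrite /s4 s2s2.
have -> : s4 x * s4 (G4 z) * A (G4 x) z * (s4 (G4 z) * s4 y * B z (G4 y))
  = (s4 (G4 z) * s4 (G4 z)) * (s4 x * s4 y * (A (G4 x) z * B z (G4 y))) by ring.
by rewrite h mul1r.
Qed.

Lemma trace_mul_conj A B : trace (opmul A B) = trace (opmul (conj4 A) (conj4 B)).
Proof. by rewrite -conj4_mul trace_conj4. Qed.

Lemma conj4_tensor r1 r2 : conj4 (tensor r1 r2) = tensor r1 (tw r2).
Proof.
apply: functional_extensionality => x; apply: functional_extensionality => y.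
rewrite /conj4 /tensor /tw /s4 /G4 /=; ring.
Qed.

Lemma conj4_onA : conj4 (onA (proj (Psi R i j))) = onA (proj (Psi R false false)).
Proof.
apply: functional_extensionality => -[[a1 b1] [a2 b2]].
apply: functional_extensionality => -[[a1' b1'] [a2' b2']].
rewrite /conj4 /onA /proj /s4 /G4 /s2 /g2 /= !PsiE !conjM !sgJ /sg.
have ft : (false == true) = false by [].
have tf : (true == false) = false by [].
by case: i; case: j; case: a2; case: b2; case: a2'; case: b2' => /=;
  rewrite ?eqxx ?ft ?tf ?andbT ?andbF /=; ring.
Qed.

Lemma conj4_onB : conj4 (onB (proj (Psi R i j))) = onB (proj (Psi R false false)).
Proof.
apply: functional_extensionality => -[[a1 b1] [a2 b2]].
apply: functional_extensionality => -[[a1' b1'] [a2' b2']].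
rewrite /conj4 /onB /proj /s4 /G4 /s2 /g2 /= !PsiE !conjM !sgJ /sg.
have ft : (false == true) = false by [].
have tf : (true == false) = false by [].
by case: i; case: j; case: a2; case: b2; case: a2'; case: b2' => /=;
  rewrite ?eqxx ?ft ?tf ?andbT ?andbF /=; ring.
Qed.

Lemma pprime_tw r1 r2 : pprime i j r1 r2 = pprime false false r1 (tw r2).
Proof. by rewrite /pprime trace_mul_conj conj4_onA conj4_tensor. Qed.

Lemma Fprime_tw r1 r2 : Fprime i j r1 r2 = Fprime false false r1 (tw r2).
Proof.
rewrite /Fprime pprime_tw trace_mul_conj conj4_mul conj4_onA conj4_onB conj4_tensor.
by [].
Qed.

Lemma twK r : tw (tw r) = r.
Proof.
apply: functional_extensionality => x; apply: functional_extensionality => y.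
rewrite /tw !g2K.
have -> : s2 x * s2 y * (s2 (g2 x) * s2 (g2 y) * r x y)
   = (s2 x * s2 (g2 x)) * (s2 y * s2 (g2 y)) * r x y by ring.
by rewrite !s2g2 !mul1r.
Qed.

Lemma expect_tw v r : expect v (tw r) = expect (fun z => s2 (g2 z) * v (g2 z)) r.
Proof.
rewrite /expect [RHS](reindex_inj g2inj) /=.
apply: eq_bigr => x _; rewrite [RHS](reindex_inj g2inj) /=.
apply: eq_bigr => y _; rewrite !g2K /tw conjM s2J; ring.
Qed.

Lemma trace_tw r : trace (tw r) = trace r.
Proof.
rewrite /trace [RHS](reindex_inj g2inj) /=.
by apply: eq_bigr => x _; rewrite /tw s2s2 mul1r.
Qed.

Lemma density_tw r : density r -> density (tw r).
Proof.
case=> h1 h2; split; last by rewrite trace_tw.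
by move=> v; rewrite expect_tw.
Qed.

Lemma S_tw p F r : S_pF p F r -> S_pF p F (tw r).
Proof.
case=> hd [[sigma [hs hr]] he]; split; first exact: (@density_tw r hd).
split.
  exists (tw sigma); split; first exact: (@density_tw sigma hs).
  rewrite hr.
  apply: functional_extensionality => x; apply: functional_extensionality => y.
  have hP : forall z, Psi R false false z = phiplus R z.
    by move=> [a b]; rewrite PsiE /sg mul1r !addbF.
  rewrite /tw /proj.
  rewrite !hP -(phiE x) -(phiE y) conjM s2J; ring.
rewrite expect_tw -he.
have -> : (fun z => s2 (g2 z) * Psi R false false (g2 z)) = Psi R false false.
  apply: functional_extensionality => -[a b].
  rewrite !PsiE /sg !mul1r !addbF.
  exact: (phiE' (a, b)).
by [].
Qed.

End Aux.

Lemma Fvalues_eq (R : rcfType) (p F : R) (i j : bool) (x : R[i]) :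
  Fvalues p F i j x <-> Fvalues p F false false x.
Proof.
split.
  case=> r1 [r2 [h1 [h2 [h3 ->]]]].
  exists r1, (tw R i j r2); split; first by [].
  split; first exact: S_tw.
  by rewrite -(@pprime_tw R i j) -(@Fprime_tw R i j); split.
case=> r1 [r2 [h1 [h2 [h3 ->]]]].
exists r1, (tw R i j r2); split; first by [].
split; first exact: S_tw.
by rewrite (@pprime_tw R i j) (@Fprime_tw R i j) twK; split.
Qed.

Theorem proposition3 (R : rcfType) (p F : R) :
  0 <= F -> F <= 1 -> 0 <= p -> p <= F ->
  forall (i j : bool) (x : R[i]),
    (is_max (Fvalues p F i j) x <-> is_max (Fvalues p F false false) x) /\
    (is_min (Fvalues p F i j) x <-> is_min (Fvalues p F false false) x).
Proof.
move=> _ _ _ _ i j x.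
have E := @Fvalues_eq R p F i j.
rewrite /is_max /is_min; split; split; case=> [h1 h2]; split;
  try (by apply/E); move=> y hy; apply: h2; apply/E; exact: hy.
Qed.
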